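(* Let $\Omega_n=\dfrac{\pi^{n/2}}{\Gamma\left(\frac n2+1\right)}$ for $n\in\mathbb{N}_0$. Then \[ \sqrt{\frac{n+\frac12}{2\pi}+\frac1{16\pi n}-\frac1{32\pi n^2}-\frac5{256\pi n^3}}<\frac{\Omega_{n-1}}{\Omega_n} \] for every integer $n\ge1$, and \[ \frac{\Omega_{n-1}}{\Omega_n}<\sqrt{\frac{n+\frac12}{2\pi}+\frac1{16\pi n}-\frac1{32\pi n^2}} \] for every integer $n\ge2$.
   Context: $\Omega_n$ is the volume of the unit ball in $\mathbb{R}^n$ ($\Omega_0=1$); $\Gamma$ is Euler's gamma function. *)

(* Defs.v *)
From HB Require Import structures.
From mathcomp Require Import all_boot all_order all_algebra.
From mathcomp Require Import all_classical all_reals all_analysis.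
Set Implicit Arguments. Unset Strict Implicit. Unset Printing Implicit Defensive.
Import Order.TTheory GRing.Theory Num.Theory.
Local Open Scope classical_set_scope.
Local Open Scope ring_scope.

(* Euler's Gamma function, Gamma(x) = int_0^oo t^(x-1) e^(-t) dt (Lebesgue integral);
   only used at x >= 1 where the integral converges. *)
Definition Gamma (R : realType) (x : R) : R :=
  Rintegral (@lebesgue_measure R) `[0%R, +oo[%classic
    (fun t => powR t (x - 1) * expR (- t)).

(* Omega_n = pi^(n/2) / Gamma(n/2 + 1), the volume of the unit ball in R^n. *)
Definition Omega (R : realType) (n : nat) : R :=
  powR pi (n%:R / 2) / Gamma (n%:R / 2 + 1).

(* Main.v *)
Require Import Defs.
From HB Require Import structures.
From mathcomp Require Import all_boot all_order all_algebra.
From mathcomp Require Import all_classical all_reals all_analysis.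
From mathcomp Require Import measurable_realfun ring lra zify.
Import Order.TTheory GRing.Theory Num.Theory.
Import numFieldNormedType.Exports.
Local Open Scope classical_set_scope.
Local Open Scope ring_scope.

Section G.
Context {R : realType}.
Notation mu := (@lebesgue_measure R).

Lemma der_of {F : R -> R} {x d : R} : is_derive x 1 F d -> derivable F x 1 /\ F^`()%classic x = d.
Proof. by move=> H; split; [exact: ex_derive | rewrite derive1E derive_val]. Qed.

Lemma dexpN (x : R) : is_derive x 1 (fun t => expR (- t)) (- expR (- x)).
Proof.
have := is_derive1_comp (is_derive_expR (- x)) (is_deriveNid x 1).
by rewrite mulrN1.
Qed.

Lemma dNexpN (x : R) : is_derive x 1 (fun t => - expR (- t)) (expR (- x)).
Proof. by have := is_deriveN (dexpN x); rewrite opprK. Qed.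

Lemma cexpN : continuous (fun t : R => expR (- t)).
Proof. move=> x; apply: continuous_comp; last exact: continuous_expR. exact: continuousN. Qed.

Definition Gi (x : R) (t : R) : R := powR t (x - 1) * expR (- t).
Definition Ge (x : R) : \bar R := (\int[mu]_(t in `[0%R, +oo[) (Gi x t)%:E)%E.

Lemma GammaE x : Gamma x = fine (Ge x).
Proof. by []. Qed.

Lemma Gi_ge0 x t : 0 <= Gi x t.
Proof. by rewrite /Gi mulr_ge0 // ?powR_ge0 ?expR_ge0. Qed.

Lemma mGi x : measurable_fun setT (Gi x).
Proof.
apply: measurable_funM; first exact: measurable_powR.
apply: measurableT_comp => //; exact: measurable_funN.
Qed.

Lemma Ge_ge0 x : (0 <= Ge x)%E.
Proof. by apply: integral_ge0 => t _; rewrite lee_fin Gi_ge0. Qed.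

Lemma Ge1 : Ge 1 = 1%E.
Proof.
rewrite /Ge /Gi; under eq_integral do rewrite subrr powRr0 mul1r.
rewrite (@ge0_continuous_FTC2y _ _ (fun x => - expR (- x)) _ 0).
- by rewrite oppr0 expR0 EFinN oppeK add0e.
- by move=> x _; exact: expR_ge0.
- by apply: continuous_subspaceT; exact: cexpN.
- rewrite -oppr0; apply: cvgN; exact: cvgr_expR.
- by move=> x _; case: (der_of (dNexpN x)).
- apply: cvg_at_right_filter; apply: cvgN; exact: cexpN.
- by move=> x _; case: (der_of (dNexpN x)).
Qed.

Lemma dh (y x : R) : 0 < x -> is_derive x 1 (fun t => powR t y * expR (- t))
  (y * (powR x (y - 1) * expR (- x)) - powR x y * expR (- x)).
Proof.
move=> x0.
have := is_deriveM (is_derive1_powR y x0) (dexpN x).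
rewrite /GRing.scale /= => H.
have -> : y * (powR x (y - 1) * expR (- x)) - powR x y * expR (- x) =
  powR x y * - expR (- x) + expR (- x) * (y * powR x (y - 1)) by ring.
exact: H.
Qed.

Definition P (p : R) (s : R) := powR s p * expR (- s).

Lemma Pcont (p t : R) : 0 < t -> {for t, continuous (P p)}.
Proof.
move=> t0; apply: differentiable_continuous; apply/derivable1_diffP.
by case: (der_of (dh p t t0)).
Qed.

Lemma Pright (p : R) : 0 <= p -> P p @ 0^'+ --> P p 0.
Proof.
move=> p0; apply: cvgM; last by apply: cvg_at_right_filter; exact: cexpN.
case: (eqVneq p 0) => [->|pn0].
  rewrite powRr0; apply: cvg_near_cst; near=> s; by rewrite powRr0.
rewrite powR0 //; apply: powR_cvg0; by rewrite lt_def pn0 p0.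
Unshelve. all: by end_near.
Qed.

Lemma Pwithin (p : R) : 0 <= p -> {within `[0, +oo[, continuous (P p)}.
Proof.
move=> p0; apply/continuous_within_itvcyP; split; last exact: Pright.
by move=> t; rewrite in_itv/= andbT => t0; exact: Pcont.
Qed.

Lemma Plim (p : R) : 0 <= p -> P p x @[x --> +oo] --> 0.
Proof.
move=> p0; have pn := archi_boundP p0; set n := Num.Def.archi_bound p in pn.
pose C : R := 2 ^+ n.+1 * n.+1`!%:R.
apply: (@squeeze_cvgr _ _ _ _ (fun=> 0) (fun s => C * expR (- (2^-1 * s)))).
- near=> s; apply/andP; split; first by rewrite /P mulr_ge0 ?powR_ge0 ?expR_ge0.
  have s1 : 1 <= s by near: s; exact: nbhs_pinfty_ge.
  have s0 : 0 < s by lra.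
  have h1 : powR s p <= s ^+ n.+1.
    rewrite -powR_mulrn; last lra.
    apply: ler_powR => //; apply: (le_trans (ltW pn)); by rewrite ler_nat leqnSn.
  have h2 := @expR_ge1Dxn R (2^-1 * s) n ltac:(lra).
  have h3 : s ^+ n.+1 <= C * expR (2^-1 * s).
    rewrite /C exprMn in h2.
    have f0 : (0 : R) < n.+1`!%:R by rewrite ltr0n fact_gt0.
    have t0 : (0 : R) < 2 ^+ n.+1 by rewrite exprn_gt0.
    have : (2^-1) ^+ n.+1 * s ^+ n.+1 / n.+1`!%:R <= expR (2^-1 * s).
      by apply: le_trans h2; rewrite lerDr.
    move=> hh.
    rewrite (_ : s ^+ n.+1 = C * ((2^-1) ^+ n.+1 * s ^+ n.+1 / n.+1`!%:R)).
      by apply: ler_wpM2l => //; rewrite /C mulr_ge0 // ltW.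
    rewrite /C exprVn; field.
    by rewrite gt_eqF // gt_eqF.
  have e0 := expR_gt0 (- s).
  rewrite /P; apply: (le_trans (ler_wpM2r (ltW e0) h1)).
  apply: (le_trans (ler_wpM2r (ltW e0) h3)).
  rewrite -mulrA -expRD (_ : 2^-1 * s + - s = - (2^-1 * s)); first exact: lexx.
  by field.
- exact: cvg_cst.
- rewrite -(mulr0 C); apply: cvgM; first exact: cvg_cst.
  apply: (cvg_comp (fun z => 2^-1 * z) (fun z => expR (- z))); last exact: cvgr_expR.
  apply: gt0_cvgMry; first lra.
  exact: cvg_id.
Unshelve. all: by end_near.
Qed.

Lemma mP (p : R) : measurable_fun setT (P p).
Proof.
apply: measurable_funM; first exact: measurable_powR.
apply: measurableT_comp => //; exact: measurable_funN.
Qed.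

Lemma mEf (g : R -> R) (D : set R) : measurable_fun setT g ->
  measurable_fun D (fun x => (g x)%:E).
Proof. by move=> mg; apply/measurable_EFinP; exact: measurable_funTS. Qed.

Lemma P_ge0 p t : 0 <= P p t.
Proof. by rewrite /P mulr_ge0 // ?powR_ge0 ?expR_ge0. Qed.

Lemma Psplit (y t : R) : 0 < y -> 0 <= t -> P y t = t * P (y - 1) t.
Proof. by move=> y0 t0; rewrite /P mulrA mulr_powRB1. Qed.

Lemma within_comb (A : set R) (c : R) (g1 g2 : R -> R) :
  {within A, continuous g1} -> {within A, continuous g2} ->
  {within A, continuous (fun t => c * g1 t - g2 t)}.
Proof.
move=> c1 c2 x; apply: cvgB; last exact: c2.
by apply: cvgM; [exact: cvg_cst | exact: c1].
Qed.

Lemma split0y (y : R) (g : R -> R) : 0 < y -> measurable_fun setT g ->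
  (forall t, 0 <= t -> 0 <= g t) ->
  (\int[mu]_(t in `[0%R, +oo[) (g t)%:E =
   \int[mu]_(t in `[0%R, y]) (g t)%:E + \int[mu]_(t in `[y, +oo[) (g t)%:E)%E.
Proof.
move=> y0 mg g0.
rewrite (@itv_bndbnd_setU _ _ (BLeft 0) (BLeft y) +oo%O); last 2 first.
- by rewrite bnd_simp ltW.
- by [].
rewrite ge0_integral_setU //=; last 3 first.
- exact: mEf.
- move=> t; rewrite /= !in_itv /= => -[/andP[t0 _]|/andP[ty _]]; rewrite lee_fin g0 //.
  exact: (le_trans (ltW y0)).
- apply/disj_setPS => t [] /=; rewrite !in_itv /= => /andP[_ ty] /andP[yt _].
  by move: (lt_le_trans ty yt); rewrite ltxx.
rewrite integral_itv_bndo_bndc //; exact: mEf.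
Qed.

Lemma Ge_rec (y : R) : 1 <= y -> Ge (y + 1) = (y%:E * Ge y)%E.
Proof.
move=> y1; have y0 : 0 < y by apply: lt_le_trans y1.
have y10 : 0 <= y - 1 by rewrite subr_ge0.
have -> : Ge (y + 1) = (\int[mu]_(t in `[0%R, +oo[) (P y t)%:E)%E.
  by rewrite /Ge; apply: eq_integral => t _; rewrite /Gi addrK.
have -> : (y%:E * Ge y = \int[mu]_(t in `[0%R, +oo[) (y * P (y - 1) t)%:E)%E.
  rewrite /Ge -ge0_integralZl_EFin //.
  all: try (by move=> t _; rewrite lee_fin Gi_ge0).
  all: try (by apply/measurable_EFinP; apply: measurable_funTS; exact: mGi).
  all: try (exact: ltW).
have mQ : measurable_fun setT (fun t => y * P (y - 1) t).
  by apply: measurable_funM => //; exact: mP.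
rewrite (split0y _ _ y0 (mP y)) ?(split0y _ _ y0 mQ); last 2 first.
- by move=> t _; rewrite mulr_ge0 ?P_ge0 // ltW.
- by move=> t _; exact: P_ge0.
have hc : (\int[mu]_(t in `[0%R, y]) (y * P (y - 1) t)%:E =
    (P y y)%:E + \int[mu]_(t in `[0%R, y]) (P y t)%:E)%E.
  transitivity (\int[mu]_(t in `[0%R, y]) ((y * P (y - 1) t - P y t)%:E + (P y t)%:E))%E.
    by apply: eq_integral => t _; rewrite -EFinD subrK.
  have mB : measurable_fun setT (fun t => y * P (y - 1) t - P y t).
    exact: measurable_funB mQ (mP y).
  rewrite ge0_integralD //=; last 4 first.
  - move=> t; rewrite in_itv /= => /andP[t0 ty].
    by rewrite lee_fin (Psplit _ _ y0 t0) -mulrBl mulr_ge0 ?subr_ge0 ?P_ge0.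
  - exact: mEf mB.
  - by move=> t _; rewrite lee_fin P_ge0.
  - exact: mEf (mP y).
  congr (_ + _)%E.
  rewrite (@continuous_FTC2 _ (fun t : R => y * P (y - 1) t - P y t) (P y) 0 y y0).
  - rewrite /P powR0 ?mul0r ?subr0 //; last by rewrite gt_eqF.
    by rewrite -EFinB subr0.
  - have sub : `[0, y] `<=` `[0, +oo[ by move=> t /=; rewrite !in_itv /= => /andP[-> _].
    have c1 := continuous_subspaceW sub (Pwithin _ y10).
    have c2 := continuous_subspaceW sub (Pwithin _ (ltW y0)).
    exact: (within_comb _ y _ _ c1 c2).
  - split.
    + move=> t; rewrite in_itv /= => /andP[t0 _].
      by case: (der_of (dh y t t0)).
    + exact: Pright _ (ltW y0).
    + by apply: cvg_at_left_filter; exact: Pcont.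
  - move=> t; rewrite in_itv /= => /andP[t0 _].
    by case: (der_of (dh y t t0)).
have hd : (\int[mu]_(t in `[y, +oo[) (P y t)%:E =
    (P y y)%:E + \int[mu]_(t in `[y, +oo[) (y * P (y - 1) t)%:E)%E.
  transitivity (\int[mu]_(t in `[y, +oo[) ((P y t - y * P (y - 1) t)%:E + (y * P (y - 1) t)%:E))%E.
    by apply: eq_integral => t _; rewrite -EFinD subrK.
  have mB : measurable_fun setT (fun t => P y t - y * P (y - 1) t).
    exact: measurable_funB (mP y) mQ.
  rewrite ge0_integralD //=; last 4 first.
  - move=> t; rewrite in_itv /= andbT => yt.
    have t0 : 0 <= t by apply: le_trans yt; exact: ltW.
    by rewrite lee_fin (Psplit _ _ y0 t0) -mulrBl mulr_ge0 ?subr_ge0 ?P_ge0.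
  - exact: mEf mB.
  - by move=> t _; rewrite lee_fin mulr_ge0 ?P_ge0 // ltW.
  - exact: mEf mQ.
  congr (_ + _)%E.
  rewrite (@ge0_continuous_FTC2y _ (fun t : R => P y t - y * P (y - 1) t)
     (fun t => - P y t) y 0).
  - by rewrite EFinN sub0e oppeK.
  - move=> t yt.
    have t0 : 0 <= t by apply: le_trans yt; exact: ltW.
    by rewrite (Psplit _ _ y0 t0) -mulrBl mulr_ge0 ?subr_ge0 ?P_ge0.
  - have sub : `[y, +oo[ `<=` `[0, +oo[.
      by move=> t /=; rewrite !in_itv /= !andbT => yt; apply: le_trans yt; exact: ltW.
    have c1 := continuous_subspaceW sub (Pwithin _ y10).
    have c2 := continuous_subspaceW sub (Pwithin _ (ltW y0)).
    move=> t; apply: cvgB; first exact: c2.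
    by apply: cvgM; [exact: cvg_cst | exact: c1].
  - rewrite -oppr0; apply: cvgN; exact: Plim (ltW y0).
  - move=> t yt; have t0 : 0 < t by apply: lt_trans yt.
    exact: derivableN (proj1 (der_of (dh y t t0))).
  - apply: cvgN; apply: cvg_at_right_filter; exact: Pcont.
  - move=> t; rewrite in_itv /= andbT => yt; have t0 : 0 < t by apply: lt_trans yt.
    have := der_of (is_deriveN (dh y t t0)); case => _ ->.
    by rewrite opprB.
rewrite hc hd addeA [(_ + (P y y)%:E)%E]addeC addeA.
by [].
Qed.

Lemma Gi_pt (y t : R) : 1 <= y -> 0 <= t ->
  Gi (y + 2^-1) t <= 2^-1 * Num.sqrt y * Gi y t + 2^-1 / Num.sqrt y * Gi (y + 1) t.
Proof.
move=> y1 t0; have y0 : 0 < y by apply: lt_le_trans y1.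
have s0 : 0 < Num.sqrt y by rewrite sqrtr_gt0.
have a0 := Gi_ge0 y t.
have h1 : Gi (y + 1) t = t * Gi y t.
  by rewrite /Gi addrK mulrA mulr_powRB1.
rewrite h1.
case: (eqVneq t 0) => [->|tn0].
  have hne : y + 2^-1 - 1 != 0 by rewrite gt_eqF //; lra.
  rewrite {1}/Gi powR0 // mul0r.
  apply: addr_ge0; apply: mulr_ge0.
  - by rewrite mulr_ge0 // ltW.
  - exact: Gi_ge0.
  - by rewrite mulr_ge0 // invr_ge0 ltW.
  - by rewrite mul0r.
have tp : 0 < t by rewrite lt_def tn0 t0.
have -> : Gi (y + 2^-1) t = Gi y t * Num.sqrt t.
  rewrite /Gi -powR12_sqrt // mulrAC -powRD; last by rewrite tn0 implybT.
  by congr (powR _ _ * _); field.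
set a := Gi y t; set u := Num.sqrt t; set sy := Num.sqrt y.
have -> : t = u ^+ 2 by rewrite /u sqr_sqrtr.
rewrite -subr_ge0.
have -> : 2^-1 * sy * a + 2^-1 / sy * (u ^+ 2 * a) - a * u = a * (sy - u) ^+ 2 / (2 * sy).
  by field; rewrite gt_eqF.
apply: divr_ge0; first by apply: mulr_ge0 => //; exact: sqr_ge0.
by rewrite mulr_ge0 // sqrtr_ge0.
Qed.

Lemma Ge_CS (y : R) : 1 <= y -> (Ge (y + 2^-1) <= (Num.sqrt y)%:E * Ge y)%E.
Proof.
move=> y1; have y0 : 0 < y by apply: lt_le_trans y1.
have s0 : 0 < Num.sqrt y by rewrite sqrtr_gt0.
have c1 : (0 : R) <= 2^-1 * Num.sqrt y by rewrite mulr_ge0 // ltW.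
have c2 : (0 : R) <= 2^-1 / Num.sqrt y by rewrite mulr_ge0 // invr_ge0 ltW.
have mG (x : R) : measurable_fun (`[0%R, +oo[ : set R) (fun t : R => (Gi x t)%:E).
  exact: mEf (mGi x).
apply: (@le_trans _ _ (\int[mu]_(t in `[0%R, +oo[)
   ((2^-1 * Num.sqrt y)%:E * (Gi y t)%:E + (2^-1 / Num.sqrt y)%:E * (Gi (y + 1) t)%:E))%E).
  apply: ge0_le_integral => //.
  all: first [ by move=> t _; rewrite lee_fin Gi_ge0
             | by move=> t _; rewrite -!EFinM -EFinD lee_fin addr_ge0 // mulr_ge0 // Gi_ge0
             | exact: mEf (mGi _)
             | (under [X in measurable_fun _ X]eq_fun do rewrite -!EFinM -EFinD;
                apply: mEf; apply: measurable_funD; apply: measurable_funM => //; exact: mGi)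
             | (move=> t; rewrite /= in_itv /= andbT => t0; by rewrite -!EFinM -EFinD lee_fin Gi_pt)
             | idtac ].
rewrite ge0_integralD //; last 4 first.
- by move=> t _; rewrite mule_ge0 // lee_fin Gi_ge0.
- under [X in measurable_fun _ X]eq_fun do rewrite -EFinM.
  apply: mEf; apply: measurable_funM => //; exact: mGi.
- by move=> t _; rewrite mule_ge0 // lee_fin Gi_ge0.
- under [X in measurable_fun _ X]eq_fun do rewrite -EFinM.
  apply: mEf; apply: measurable_funM => //; exact: mGi.
rewrite !ge0_integralZl_EFin //.
all: first [ by move=> t _; rewrite lee_fin Gi_ge0 | exact: mEf (mGi _) | idtac ].
rewrite -/(Ge y) -/(Ge (y + 1)) Ge_rec // muleA -EFinM -ge0_muleDl; last 2 first.
- by rewrite lee_fin.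
- by rewrite lee_fin mulr_ge0 // ltW.
rewrite -EFinD (_ : 2^-1 * Num.sqrt y + 2^-1 / Num.sqrt y * y = Num.sqrt y); first exact: lexx.
rewrite -{3}(sqr_sqrtr (ltW y0)).
field; by rewrite gt_eqF.
Qed.

End G.
Section Seq.
Context {R : realType}.

Definition uf (x : R) := x + 2^-1 + x^-1 / 8 - x^-1 ^+ 2 / 16.
Definition lf (x : R) := uf x - 5 * x^-1 ^+ 3 / 128.

Lemma uf_ge (x : R) : 1 <= x -> x + 2^-1 <= uf x.
Proof.
move=> x1; have x0 : 0 < x by lra.
have t0 : 0 < x^-1 by rewrite invr_gt0.
have t1 : x^-1 <= 1 by rewrite invf_le1.
rewrite /uf; nra.
Qed.

Lemma uf_le (x : R) : 1 <= x -> uf x <= x + 1.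
Proof.
move=> x1; have x0 : 0 < x by lra.
have t0 : 0 < x^-1 by rewrite invr_gt0.
have t1 : x^-1 <= 1 by rewrite invf_le1.
rewrite /uf; nra.
Qed.

Lemma lf_gt0 (x : R) : 1 <= x -> 0 < lf x.
Proof.
move=> x1; have x0 : 0 < x by lra.
have t0 : 0 < x^-1 by rewrite invr_gt0.
have t1 : x^-1 <= 1 by rewrite invf_le1.
have t2 : x^-1 ^+ 3 <= 1 by rewrite exprn_ile1 // ltW.
rewrite /lf /uf; nra.
Qed.

Lemma lf_le (x : R) : 1 <= x -> lf x <= x + 1.
Proof.
move=> x1; have t0 : 0 < x^-1 by rewrite invr_gt0; lra.
have := uf_le _ x1; rewrite /lf; have : 0 <= x^-1 ^+ 3 by rewrite exprn_ge0 // ltW.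
lra.
Qed.

Lemma uf_step (x : R) : 2 <= x -> (x + 1) ^+ 2 * uf (x + 2) < (x + 2) ^+ 2 * uf x.
Proof.
move=> x2; have x0 : 0 < x by lra.
rewrite -subr_gt0.
have -> : (x + 2) ^+ 2 * uf x - (x + 1) ^+ 2 * uf (x + 2) =
  (5 * x ^+ 2 - 16) / (16 * x ^+ 2 * (x + 2) ^+ 2).
  rewrite /uf; field.
  by apply/andP; split; rewrite gt_eqF //; lra.
apply: divr_gt0; first nra.
apply: mulr_gt0; first apply: mulr_gt0 => //.
all: apply: exprn_gt0; lra.
Qed.

Lemma lf_step (x : R) : 1 <= x -> (x + 2) ^+ 2 * lf x < (x + 1) ^+ 2 * lf (x + 2).
Proof.
move=> x1; have x0 : 0 < x by lra.
rewrite -subr_gt0.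
have -> : (x + 1) ^+ 2 * lf (x + 2) - (x + 2) ^+ 2 * lf x =
  (115 * x ^+ 3 + 528 * x ^+ 2 + 656 * x + 160) / (128 * x ^+ 3 * (x + 2) ^+ 3).
  rewrite /lf /uf; field.
  by apply/andP; split; rewrite gt_eqF //; lra.
have h2 : 0 < x ^+ 2 by apply: exprn_gt0.
have h3 : 0 < x ^+ 3 by apply: exprn_gt0.
apply: divr_gt0; first lra.
apply: mulr_gt0; first apply: mulr_gt0 => //.
all: apply: exprn_gt0; lra.
Qed.


Lemma natr_add (j k : nat) : ((j + k)%:R : R) = j%:R + k%:R.
Proof. by rewrite natrD. Qed.

Lemma upper_seq (A : nat -> R) :
  (forall m, 0 < A m) ->
  (forall m, A m.+2 * (m.+2%:R) ^+ 2 = A m * (m.+3%:R) ^+ 2) ->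
  (forall m, A m <= m.+2%:R) ->
  forall m, (1 <= m)%N -> A m < uf (m.+1%:R).
Proof.
move=> A0 Arec Aub m m1.
rewrite ltNge; apply/negP => H.
pose r j := A j / uf (j.+1%:R).
have uf0 j : 0 < uf (j.+1%:R).
  have h : 1 <= (j.+1%:R : R) by rewrite ler1n.
  have := uf_ge _ h; lra.
have rinc j : (1 <= j)%N -> r j < r j.+2.
  move=> j1; rewrite /r.
  have x2 : 2 <= (j.+1%:R : R) by rewrite ler_nat ltnS.
  have e1 : (j.+3%:R : R) = j.+1%:R + 2 by rewrite -addn2 natr_add.
  have e2 : (j.+2%:R : R) = j.+1%:R + 1 by rewrite -addn1 natr_add.
  move: (uf0 j) (uf0 j.+2) (uf_step _ x2) (Arec j) (A0 j).
  rewrite e1 e2; set x := (j.+1%:R : R) => u0 u2 st ar a0.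
  have x0 : 0 < x by lra.
  have eA : A j.+2 = A j * (x + 2) ^+ 2 / (x + 1) ^+ 2.
    by rewrite -ar; field; rewrite gt_eqF //; lra.
  rewrite eA -subr_gt0.
  have -> : A j * (x + 2) ^+ 2 / (x + 1) ^+ 2 / uf (x + 2) - A j / uf x =
      A j * ((x + 2) ^+ 2 * uf x - (x + 1) ^+ 2 * uf (x + 2)) /
      ((x + 1) ^+ 2 * uf (x + 2) * uf x).
    field; rewrite !gt_eqF //; lra.
  apply: divr_gt0; first by apply: mulr_gt0 => //; rewrite subr_gt0.
  apply: mulr_gt0 => //; apply: mulr_gt0 => //; apply: exprn_gt0; lra.
have r1 : 1 <= r m by rewrite /r ler_pdivlMr // mul1r.
set rho := r m.+2.
have rho1 : 1 < rho by apply: le_lt_trans r1 (rinc m m1).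
have mono k : rho <= r (m.+2 + 2 * k)%N.
  elim: k => [|k IH]; first by rewrite muln0 addn0.
  apply: (le_trans IH); apply: ltW.
  have -> : (m.+2 + 2 * k.+1 = (m.+2 + 2 * k).+2)%N by lia.
  by apply: rinc; lia.
have rub j : r j <= j.+2%:R / (j.+1%:R + 2^-1).
  rewrite /r; have h : 1 <= (j.+1%:R : R) by rewrite ler1n.
  have u1 := uf_ge _ h.
  have p0 : 0 < (j.+1%:R : R) + 2^-1 by lra.
  apply: (le_trans (ler_wpM2r _ (Aub j))); first by rewrite invr_ge0 ltW.
  apply: ler_wpM2l; first by rewrite ler0n.
  by rewrite lef_pV2 // posrE.
set k := Num.Def.archi_bound ((2 * (rho - 1))^-1).
have hk : (2 * (rho - 1))^-1 < k%:R.
  by apply: archi_boundP; rewrite invr_ge0; lra.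
have := le_trans (mono k) (rub (m.+2 + 2 * k)%N).
set j := (m.+2 + 2 * k)%N.
have jk : (k%:R : R) <= j%:R by rewrite ler_nat /j; lia.
have ej : (j.+2%:R : R) = j%:R + 2 by rewrite -addn2 natr_add.
have ej1 : (j.+1%:R : R) = j%:R + 1 by rewrite -addn1 natr_add.
rewrite ej ej1.
have rr : 0 < rho - 1 by lra.
have hk2 : 1 < 2 * (rho - 1) * k%:R.
  have c0 : 0 < 2 * (rho - 1) by lra.
  have : 2 * (rho - 1) * (2 * (rho - 1))^-1 < 2 * (rho - 1) * k%:R by rewrite ltr_pM2l.
  by rewrite mulfV ?gt_eqF.
have j0 : (0 : R) <= j%:R by rewrite ler0n.
rewrite ler_pdivlMr; last lra.
nra.
Qed.

Lemma lower_seq (A : nat -> R) :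
  (forall m, 0 < A m) ->
  (forall m, A m.+2 * (m.+2%:R) ^+ 2 = A m * (m.+3%:R) ^+ 2) ->
  (forall m, m.+2%:R <= A m.+1) ->
  forall m, lf (m.+1%:R) < A m.
Proof.
move=> A0 Arec Alb m.
rewrite ltNge; apply/negP => H.
pose s j := A j / lf (j.+1%:R).
have lf0 j : 0 < lf (j.+1%:R) by apply: lf_gt0; rewrite ler1n.
have sdec j : s j.+2 < s j.
  rewrite /s.
  have x1 : 1 <= (j.+1%:R : R) by rewrite ler1n.
  have e1 : (j.+3%:R : R) = j.+1%:R + 2 by rewrite -addn2 natr_add.
  have e2 : (j.+2%:R : R) = j.+1%:R + 1 by rewrite -addn1 natr_add.
  move: (lf0 j) (lf0 j.+2) (lf_step _ x1) (Arec j) (A0 j).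
  rewrite e1 e2; set x := (j.+1%:R : R) => u0 u2 st ar a0.
  have x0 : 0 < x by lra.
  have eA : A j.+2 = A j * (x + 2) ^+ 2 / (x + 1) ^+ 2.
    by rewrite -ar; field; rewrite gt_eqF //; lra.
  rewrite eA -subr_gt0.
  have -> : A j / lf x - A j * (x + 2) ^+ 2 / (x + 1) ^+ 2 / lf (x + 2) =
      A j * ((x + 1) ^+ 2 * lf (x + 2) - (x + 2) ^+ 2 * lf x) /
      ((x + 1) ^+ 2 * lf (x + 2) * lf x).
    field; rewrite !gt_eqF //; lra.
  apply: divr_gt0; first by apply: mulr_gt0 => //; rewrite subr_gt0.
  apply: mulr_gt0 => //; apply: mulr_gt0 => //; apply: exprn_gt0; lra.
have s1 : s m <= 1 by rewrite /s ler_pdivrMr // mul1r.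
set rho := s m.+2.
have rho1 : rho < 1 by apply: lt_le_trans (sdec m) s1.
have mono k : s (m.+2 + 2 * k)%N <= rho.
  elim: k => [|k IH]; first by rewrite muln0 addn0.
  apply: le_trans IH; apply: ltW.
  have -> : (m.+2 + 2 * k.+1 = (m.+2 + 2 * k).+2)%N by lia.
  exact: sdec.
have slb j : (1 <= j)%N -> j.+1%:R / j.+2%:R <= s j.
  move=> j1; rewrite /s.
  have h : 1 <= (j.+1%:R : R) by rewrite ler1n.
  have u1 := lf_le _ h.
  have e2 : (j.+2%:R : R) = j.+1%:R + 1 by rewrite -addn1 natr_add.
  have aj : (j.+1%:R : R) <= A j.
    by move: (Alb j.-1); rewrite prednK.
  apply: (le_trans (ler_wpM2r _ aj)); first by rewrite invr_ge0 ler0n.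
  apply: ler_wpM2l; first exact: ltW.
  by rewrite lef_pV2 ?posrE ?ltr0n // e2.
set k := Num.Def.archi_bound ((1 - rho)^-1).
have hk : (1 - rho)^-1 < k%:R.
  by apply: archi_boundP; rewrite invr_ge0; lra.
set j := (m.+2 + 2 * k)%N.
have := le_trans (slb j ltac:(rewrite /j; lia)) (mono k).
have jk : (k%:R : R) <= j%:R by rewrite ler_nat /j; lia.
have ej : (j.+2%:R : R) = j%:R + 2 by rewrite -addn2 natr_add.
have ej1 : (j.+1%:R : R) = j%:R + 1 by rewrite -addn1 natr_add.
rewrite ej ej1.
have rr : 0 < 1 - rho by lra.
have hk2 : 1 < (1 - rho) * k%:R.
  have : (1 - rho) * (1 - rho)^-1 < (1 - rho) * k%:R by rewrite ltr_pM2l.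
  by rewrite mulfV ?gt_eqF.
have j0 : (0 : R) <= j%:R by rewrite ler0n.
rewrite ler_pdivrMr; last lra.
nra.
Qed.

End Seq.

Section Final.
Context {R : realType}.
Notation mu := (@lebesgue_measure R).

Definition Gk (k : nat) : R := Gamma (k%:R / 2 + 1 : R).

Lemma half_succ (k : nat) : (k.+1%:R / 2 + 1 : R) = (k%:R / 2 + 1) + 2^-1.
Proof. by rewrite -addn1 natrD; field. Qed.

Lemma half_succ2 (k : nat) : (k.+2%:R / 2 + 1 : R) = (k%:R / 2 + 1) + 1.
Proof. by rewrite -addn2 natrD; field. Qed.

Lemma half_ge1 (k : nat) : (1 : R) <= k%:R / 2 + 1.
Proof. by rewrite lerDr divr_ge0 // ler0n. Qed.

Lemma GeE_pair k : (exists2 r : R, 0 < r & Ge (k%:R / 2 + 1) = r%:E) /\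
                   (exists2 r : R, 0 < r & Ge (k.+1%:R / 2 + 1) = r%:E).
Proof.
elim: k => [|k [IH1 IH2]].
  have e0 : ((0%:R : R) / 2 + 1) = 1 by rewrite mul0r add0r.
  have e1 : ((1%:R : R) / 2 + 1) = 1 + 2^-1 by field.
  rewrite e0 e1 Ge1; split; first by exists 1.
  have ub := Ge_CS _ (lexx (1 : R)).
  rewrite sqrtr1 Ge1 mul1e in ub.
  have lb := Ge_CS (1 + 2^-1 : R) ltac:(rewrite lerDl; done).
  have e2 : (1 + 2^-1 + 2^-1 : R) = 1 + 1 by field.
  rewrite e2 in lb.
  rewrite (Ge_rec _ (lexx (1 : R))) Ge1 mule1 in lb.
  have := Ge_ge0 (1 + 2^-1 : R); move: ub lb.
  case: (Ge (1 + 2^-1)) => [r| |] //=.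
  - move=> _ lb _; exists r => //.
    rewrite -EFinM lee_fin in lb; rewrite ltNge; apply/negP => r0.
    have := ler_wpM2l (sqrtr_ge0 (1 + 2^-1)) r0; rewrite mulr0 => h.
    have := le_trans lb h; lra.
split=> //.
case: IH1 => r r0 er; exists ((k%:R / 2 + 1) * r).
  by rewrite mulr_gt0 // (lt_le_trans _ (half_ge1 k)).
by rewrite half_succ2 Ge_rec ?half_ge1 // er.
Qed.

Lemma GkE k : 0 < Gk k /\ Ge (k%:R / 2 + 1) = (Gk k)%:E.
Proof.
case: (GeE_pair k) => -[r r0 er] _.
by rewrite /Gk GammaE er.
Qed.

Lemma Gk_gt0 k : 0 < Gk k. Proof. by case: (GkE k). Qed.

Lemma Gk_rec k : Gk k.+2 = (k%:R / 2 + 1) * Gk k.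
Proof.
have := Ge_rec _ (half_ge1 k); rewrite -half_succ2 (GkE k).2 (GkE k.+2).2.
by move=> [].
Qed.

Lemma Gk_CS k : Gk k.+1 ^+ 2 <= Gk k * Gk k.+2.
Proof.
have := Ge_CS _ (half_ge1 k); rewrite -half_succ (GkE k).2 (GkE k.+1).2.
rewrite -EFinM lee_fin => h.
rewrite Gk_rec.
have g0 := Gk_gt0 k; have g1 := Gk_gt0 k.+1.
apply: (le_trans (_ : _ <= (Num.sqrt (k%:R / 2 + 1) * Gk k) ^+ 2)).
  by rewrite ler_pXn2r // ?nnegrE ?ltW //; apply: (lt_le_trans g1 h).
rewrite exprMn sqr_sqrtr; last by apply: le_trans (half_ge1 k).
by rewrite expr2 mulrCA.
Qed.

Lemma natS (k : nat) : (k.+1%:R : R) = k%:R + 1.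
Proof. by rewrite -addn1 natrD. Qed.

Lemma Omega_ratio m : Omega R m / Omega R m.+1 = Gk m.+1 / (Gk m * Num.sqrt pi).
Proof.
have p0 : (0 : R) < pi := pi_gt0 R.
have e : powR (pi : R) (m.+1%:R / 2) = powR (pi : R) (m%:R / 2) * Num.sqrt (pi : R).
  rewrite (_ : m.+1%:R / 2 = m%:R / 2 + 2^-1 :> R); last by rewrite natS; field.
  rewrite powRD; last by rewrite gt_eqF // implybT.
  by rewrite powR12_sqrt // ltW.
rewrite /Omega -/(Gk m) -/(Gk m.+1) e.
have g0 := Gk_gt0 m; have g1 := Gk_gt0 m.+1.
have s0 : 0 < Num.sqrt (pi : R) by rewrite sqrtr_gt0.
have w0 : 0 < powR (pi : R) (m%:R / 2) by rewrite powR_gt0.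
by field; rewrite !gt_eqF.
Qed.

Definition A m := 2 * Gk m.+1 ^+ 2 / Gk m ^+ 2.

Lemma A_gt0 m : 0 < A m.
Proof.
have g0 := Gk_gt0 m; have g1 := Gk_gt0 m.+1.
by rewrite /A divr_gt0 // ?mulr_gt0 // exprn_gt0.
Qed.

Lemma A_rec m : A m.+2 * (m.+2%:R) ^+ 2 = A m * (m.+3%:R) ^+ 2.
Proof.
have g0 := Gk_gt0 m; have g1 := Gk_gt0 m.+1.
rewrite /A (Gk_rec m.+1) (Gk_rec m) !natS.
by field; rewrite !gt_eqF //; lra.
Qed.

Lemma A_ub m : A m <= m.+2%:R.
Proof.
have g0 := Gk_gt0 m; have g1 := Gk_gt0 m.+1.
have := Gk_CS m; rewrite Gk_rec => h.
rewrite /A ler_pdivrMr ?exprn_gt0 //.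
have -> : m.+2%:R * Gk m ^+ 2 = 2 * (Gk m * ((m%:R / 2 + 1) * Gk m)).
  by rewrite !natS; field.
by rewrite ler_pM2l.
Qed.

Lemma A_lb m : m.+2%:R <= A m.+1.
Proof.
have g0 := Gk_gt0 m; have g1 := Gk_gt0 m.+1; have g2 := Gk_gt0 m.+2.
have h := Gk_CS m.
rewrite /A ler_pdivlMr ?exprn_gt0 //.
have -> : 2 * Gk m.+2 ^+ 2 = m.+2%:R * (Gk m * Gk m.+2).
  by rewrite (Gk_rec m) !natS; field.
by rewrite ler_pM2l.
Qed.

End Final.

Theorem theorem11 (R : realType) :
  (forall n : nat, (1 <= n)%N ->
     Num.sqrt ((n%:R + 2^-1) / (2 * pi) + 1 / (16 * pi * n%:R)
               - 1 / (32 * pi * n%:R ^+ 2) - 5 / (256 * pi * n%:R ^+ 3))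
     < Omega R n.-1 / Omega R n) /\
  (forall n : nat, (2 <= n)%N ->
     Omega R n.-1 / Omega R n
     < Num.sqrt ((n%:R + 2^-1) / (2 * pi) + 1 / (16 * pi * n%:R)
                 - 1 / (32 * pi * n%:R ^+ 2))).
Proof.
have p0 : (0 : R) < pi := pi_gt0 R.
have qE m : Omega R m / Omega R m.+1 = Num.sqrt (A m / (2 * pi)).
  rewrite Omega_ratio.
  have g0 := Gk_gt0 (R:=R) m; have g1 := Gk_gt0 (R:=R) m.+1.
  have s0 : 0 < Num.sqrt (pi : R) by rewrite sqrtr_gt0.
  have q0 : 0 < Gk m.+1 / (Gk m * Num.sqrt (pi : R)) by apply: divr_gt0 => //; exact: mulr_gt0.
  rewrite -[LHS]gtr0_norm // -sqrtr_sqr; congr Num.sqrt.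
  rewrite /A expr_div_n exprMn sqr_sqrtr ?ltW //.
  move: p0 s0; move: (pi : R) => p p0 s0.
  by field; rewrite !gt_eqF.
have d0 : 0 < (2 * (pi : R))^-1 by rewrite invr_gt0 mulr_gt0.
split=> -[//|m] hm /=; rewrite qE.
- set E := (X in Num.sqrt X < _).
  have -> : E = lf (m.+1%:R) / (2 * pi).
    rewrite /E /lf /uf; move: p0; move: (pi : R) => p p0.
    have n0 : (0 : R) < m.+1%:R by rewrite ltr0n.
    by field; rewrite !gt_eqF.
  rewrite ltr_sqrt; last by rewrite divr_gt0 // ?A_gt0 // mulr_gt0.
  by rewrite ltr_pM2r //; apply: lower_seq; [exact: A_gt0|exact: A_rec|exact: A_lb].
- set E := (X in _ < Num.sqrt X).
  have -> : E = uf (m.+1%:R) / (2 * pi).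
    rewrite /E /uf; move: p0; move: (pi : R) => p p0.
    have n0 : (0 : R) < m.+1%:R by rewrite ltr0n.
    by field; rewrite !gt_eqF.
  have u0 : 0 < uf (m.+1%:R : R).
    have h : 1 <= (m.+1%:R : R) by rewrite ler1n.
    have := uf_ge _ h; lra.
  rewrite ltr_sqrt; last by rewrite divr_gt0 // mulr_gt0.
  by rewrite ltr_pM2r //; apply: upper_seq; [exact: A_gt0|exact: A_rec|exact: A_ub|].
Qed.
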